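(* Let $\Gamma=\operatorname{HNN}(G,H,\theta)$ be a non-ascending HNN extension. The following are equivalent: (i) $\operatorname{int}\Gamma=\{1\}$; (ii) the quasi-kernel $K_\varepsilon$ is trivial for some (equivalently, both) $\varepsilon\in\{\pm1\}$; (iii) for every finite subset $F\subseteq\Gamma\setminus\{1\}$ there exists $g\in\Gamma$ with $gFg^{-1}\cap G=\emptyset$; (iv) for every finite subset $F\subseteq\Gamma\setminus\{1\}$ there exists $g\in\Gamma$ with $gFg^{-1}\cap H=\emptyset$; (v) for every finite subset $F\subseteq G\setminus\{1\}$ there exists $g\in\Gamma$ with $gFg^{-1}\cap H=\emptyset$; (vi) for every finite subset $F\subseteq H\setminus\{1\}$ there exists $g\in\Gamma$ with $gFg^{-1}\cap H=\emptyset$. Moreover, if these conditions hold, then $\Gamma$ is a Powers group, and in particular $C^*$-simple.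
   Context: Let $G$ be a group, $H\le G$ a subgroup and $\theta:H\to G$ an injective homomorphism; $\Gamma=\operatorname{HNN}(G,H,\theta)=\langle G,\tau\mid \tau^{-1}h\tau=\theta(h)\ (h\in H)\rangle$. Set $H_{-1}=H$, $H_1=\theta(H)$. The extension is non-ascending if $H\neq G$ and $\theta(H)\neq G$. Fix sets $S_{-1},S_1$ of representatives of the left cosets of $H_{-1}$, resp. $H_1$, in $G$ with $1\in S_{-1}\cap S_1$. Every $g\in\Gamma$ has a unique normal form $g=g_1\tau^{\varepsilon_1}\cdots g_n\tau^{\varepsilon_n}g_{n+1}$ with $n\ge0$, $\varepsilon_i\in\{\pm1\}$, $g_i\in S_{-\varepsilon_i}$ for $1\le i\le n$, $g_{n+1}\in G$, and $g_i=1\Rightarrow\varepsilon_{i-1}=\varepsilon_i$ for $2\le i\le n$. Then $n$ is the length of $g$; if $n\ge1$, $\varepsilon_1$ is the type and $g_1$ the initial letter of $g$. For $\varepsilon\in\{\pm1\}$, $T_\varepsilon$ is the set of elements of length $\ge1$ and type $\varepsilon$, and $T_\varepsilon^\dagger\subseteq T_\varepsilon$ the subset of those with initial letter $1$. The quasi-kernels are $K_\varepsilon=\bigcap_{r\in\Gamma\setminus T_\varepsilon^\dagger} rHr^{-1}$; their normal closures in $\Gamma$ coincide, and this common normal subgroup is the interior $\operatorname{int}\Gamma$. $\Gamma$ is a Powers group if for every finite $F\subseteq\Gamma\setminus\{1\}$ and $n\ge1$ there exist a partition $\Gamma=D\sqcup E$ and $g_1,\dots,g_n\in\Gamma$ with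 $fD\cap D=\emptyset$ for $f\in F$ and $g_jE\cap g_kE=\emptyset$ for $j\ne k$. $C^*$-simple means the reduced group $C^*$-algebra is simple. *)

(* Defs.v *)
From Stdlib Require Import List Classical.
Import ListNotations.
Set Implicit Arguments.

Record Group : Type := {
  car :> Type;
  gmul : car -> car -> car;
  gone : car;
  ginv : car -> car;
  gmul_assoc : forall x y z, gmul x (gmul y z) = gmul (gmul x y) z;
  gmul_1l : forall x, gmul gone x = x;
  gmul_Vl : forall x, gmul (ginv x) x = gone }.
Arguments gmul {g} _ _.
Arguments gone {g}.
Arguments ginv {g} _.

Definition is_subgroup (G : Group) (H : G -> Prop) : Prop :=
  H gone /\ (forall x y, H x -> H y -> H (gmul x y)) /\
  (forall x, H x -> H (ginv x)).

Definition is_hom (G K : Group) (f : G -> K) : Prop :=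
  forall x y, f (gmul x y) = gmul (f x) (f y).
Arguments is_hom {G K} f.

Arguments is_subgroup {G} H.
(** theta : H -> G is an injective homomorphism (theta is given as a map on G,
    only its values on H matter). *)
Definition inj_hom_on (G : Group) (H : G -> Prop) (theta : G -> G) : Prop :=
  (forall x y, H x -> H y -> theta (gmul x y) = gmul (theta x) (theta y)) /\
  (forall x y, H x -> H y -> theta x = theta y -> x = y).

Arguments inj_hom_on {G} H theta.
Definition image_on (G : Group) (H : G -> Prop) (theta : G -> G) (g : G) : Prop :=
  exists h, H h /\ theta h = g.

Arguments image_on {G} H theta g.
Definition left_transversal (G : Group) (H S : G -> Prop) : Prop :=
  forall g : G, exists! s, S s /\ H (gmul (ginv s) g).

Arguments left_transversal {G} H S.
(** Gamma (with iota : G -> Gamma and tau) is HNN(G,H,theta), characterised by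
    the universal property of the presentation
    < G, tau | tau^-1 h tau = theta(h) (h in H) >. *)
Definition IsHNN (G : Group) (H : G -> Prop) (theta : G -> G)
  (Gam : Group) (iota : G -> Gam) (tau : Gam) : Prop :=
  is_hom iota /\
  (forall h, H h -> gmul (gmul (ginv tau) (iota h)) tau = iota (theta h)) /\
  (forall (K : Group) (phi : G -> K) (t : K),
     is_hom phi ->
     (forall h, H h -> gmul (gmul (ginv t) (phi h)) t = phi (theta h)) ->
     exists psi : Gam -> K,
       is_hom psi /\ (forall g, psi (iota g) = phi g) /\ psi tau = t /\
       (forall psi' : Gam -> K, is_hom psi' -> (forall g, psi' (iota g) = phi g) ->
          psi' tau = t -> forall x, psi' x = psi x)).

Arguments IsHNN {G} H theta {Gam} iota tau.
(** Signs epsilon in {+1,-1} are encoded as booleans: true = +1, false = -1. *)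
Definition tpow (Gam : Group) (tau : Gam) (e : bool) : Gam :=
  if e then tau else ginv tau.

(** Value of g_1 tau^e_1 ... g_n tau^e_n g_{n+1}, where l = [(g_1,e_1);...;(g_n,e_n)]. *)
Arguments tpow {Gam} tau e.
Definition nf_eval (G Gam : Group) (iota : G -> Gam) (tau : Gam)
  (l : list (G * bool)) (last : G) : Gam :=
  fold_right (fun (p : car G * bool) (acc : car Gam) => gmul (iota (fst p)) (gmul (tpow tau (snd p)) acc))
             (iota last) l.

(** g_i in S_{-e_i}: Sm = S_{-1} (reps for H_{-1}=H), Sp = S_1 (reps for H_1=theta(H)). *)
Arguments nf_eval {G Gam} iota tau l last.
Definition nf_letters (G : Group) (Sm Sp : G -> Prop) (l : list (G * bool)) : Prop :=
  Forall (fun p : car G * bool => if snd p then Sm (fst p) else Sp (fst p)) l.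

Arguments nf_letters {G} Sm Sp l.
Fixpoint nf_reduced (G : Group) (l : list (G * bool)) : Prop :=
  match l with
  | nil => True
  | p :: l' =>
      match l' with
      | nil => True
      | q :: _ => (fst q = gone -> snd p = snd q)
      end /\ nf_reduced G l'
  end.

Arguments nf_reduced {G} l.
Definition is_normal_form (G Gam : Group) (iota : G -> Gam) (tau : Gam)
  (Sm Sp : G -> Prop) (x : Gam) (l : list (G * bool)) (last : G) : Prop :=
  nf_letters Sm Sp l /\ nf_reduced l /\ nf_eval iota tau l last = x.

Arguments is_normal_form {G Gam} iota tau Sm Sp x l last.
Definition T_set (G Gam : Group) (iota : G -> Gam) (tau : Gam)
  (Sm Sp : G -> Prop) (e : bool) (x : Gam) : Prop :=
  exists g rest last, is_normal_form iota tau Sm Sp x ((g, e) :: rest) last.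

Arguments T_set {G Gam} iota tau Sm Sp e x.
Definition T_dag (G Gam : Group) (iota : G -> Gam) (tau : Gam)
  (Sm Sp : G -> Prop) (e : bool) (x : Gam) : Prop :=
  exists rest last, is_normal_form iota tau Sm Sp x ((gone, e) :: rest) last.

Arguments T_dag {G Gam} iota tau Sm Sp e x.
Definition quasi_kernel (G Gam : Group) (H : G -> Prop) (iota : G -> Gam) (tau : Gam)
  (Sm Sp : G -> Prop) (e : bool) (x : Gam) : Prop :=
  forall r : Gam, ~ T_dag iota tau Sm Sp e r ->
    exists h, H h /\ x = gmul (gmul r (iota h)) (ginv r).

Arguments quasi_kernel {G Gam} H iota tau Sm Sp e x.
Definition is_normal_subgroup (Gam : Group) (N : Gam -> Prop) : Prop :=
  is_subgroup N /\ (forall y z, N y -> N (gmul (gmul z y) (ginv z))).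

Arguments is_normal_subgroup {Gam} N.
Definition normal_closure (Gam : Group) (A : Gam -> Prop) (x : Gam) : Prop :=
  forall N : Gam -> Prop, is_normal_subgroup N -> (forall y, A y -> N y) -> N x.

Arguments normal_closure {Gam} A x.
(** int Gamma: the (common) normal closure of the quasi-kernels; taken here as
    the normal closure of K_{+1} u K_{-1}, which equals either one since they
    coincide. *)
Definition interior (G Gam : Group) (H : G -> Prop) (iota : G -> Gam) (tau : Gam)
  (Sm Sp : G -> Prop) : Gam -> Prop :=
  normal_closure (fun x => quasi_kernel H iota tau Sm Sp true x \/
                           quasi_kernel H iota tau Sm Sp false x).

Arguments interior {G Gam} H iota tau Sm Sp _.
Definition trivial_set (Gam : Group) (A : Gam -> Prop) : Prop :=
  forall x, A x -> x = gone.

Arguments trivial_set {Gam} A.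
Definition conj (Gam : Group) (g f : Gam) : Gam := gmul (gmul g f) (ginv g).

Arguments conj {Gam} g f.
(** Powers group; E is the complement of D, g_1..g_n are gs 0 .. gs (n-1). *)
Definition is_powers_group (Gam : Group) : Prop :=
  forall F : list Gam, (forall f, In f F -> f <> gone) ->
  forall n : nat, 1 <= n ->
  exists (D : Gam -> Prop) (gs : nat -> Gam),
    (forall f x, In f F -> D x -> ~ D (gmul f x)) /\
    (forall j k, j < n -> k < n -> j <> k ->
       forall x y, ~ D x -> ~ D y -> gmul (gs j) x <> gmul (gs k) y).

(* Main.v *)
Require Import Defs.
From Stdlib Require Import List Classical ClassicalEpsilon FunctionalExtensionality ProofIrrelevance Bool.
Import ListNotations.
Set Implicit Arguments.

Local Notation "x ** y" := (gmul x y) (at level 40, left associativity).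

Section GroupLemmas.
Context {K : Group}.
Implicit Types x y z : K.

Lemma mulA x y z : x ** (y ** z) = x ** y ** z.
Proof. apply gmul_assoc. Qed.
Lemma mul1l x : gone ** x = x.
Proof. apply gmul_1l. Qed.
Lemma mulVl x : ginv x ** x = gone.
Proof. apply gmul_Vl. Qed.
Lemma mulVr x : x ** ginv x = gone.
Proof.
  rewrite <- (mul1l (x ** ginv x)).
  rewrite <- (mulVl (ginv x)) at 1.
  rewrite <- mulA. rewrite (mulA (ginv x) x (ginv x)). rewrite mulVl, mul1l. apply mulVl.
Qed.
Lemma mul1r x : x ** gone = x.
Proof. rewrite <- (mulVl x), mulA, mulVr, mul1l. reflexivity. Qed.
Lemma mulKl x y : ginv x ** (x ** y) = y.
Proof. rewrite mulA, mulVl, mul1l. reflexivity. Qed.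
Lemma mulKr x y : x ** (ginv x ** y) = y.
Proof. rewrite mulA, mulVr, mul1l. reflexivity. Qed.
Lemma mulKl' x y : y ** x ** ginv x = y.
Proof. rewrite <- mulA, mulVr, mul1r. reflexivity. Qed.
Lemma mulKr' x y : y ** ginv x ** x = y.
Proof. rewrite <- mulA, mulVl, mul1r. reflexivity. Qed.
Lemma mul_cancel_l x y z : x ** y = x ** z -> y = z.
Proof. intro E. rewrite <- (mulKl x y), E, mulKl. reflexivity. Qed.
Lemma mul_cancel_r x y z : y ** x = z ** x -> y = z.
Proof. intro E. rewrite <- (mulKl' x y), E, mulKl'. reflexivity. Qed.
Lemma inv_uniq x y : x ** y = gone -> y = ginv x.
Proof. intro E. apply (mul_cancel_l x). rewrite E, mulVr. reflexivity. Qed.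
Lemma invK x : ginv (ginv x) = x.
Proof. symmetry. apply inv_uniq. apply mulVl. Qed.
Lemma inv_mul x y : ginv (x ** y) = ginv y ** ginv x.
Proof. symmetry. apply inv_uniq. rewrite mulA, <- (mulA x y), mulVr, mul1r, mulVr. reflexivity. Qed.
Lemma inv1 : ginv (gone : K) = gone.
Proof. symmetry. apply inv_uniq. apply mul1l. Qed.
Lemma inv_eq1 x : ginv x = gone -> x = gone.
Proof. intro E. rewrite <- (invK x), E, inv1. reflexivity. Qed.
Lemma mul_eq1 x y : x ** y = gone -> x = ginv y.
Proof. intro E. apply (mul_cancel_r y). rewrite E, mulVl. reflexivity. Qed.
End GroupLemmas.

Lemma hom1 (A B : Group) (f : A -> B) : is_hom f -> f gone = gone.
Proof. intro Hf. apply (mul_cancel_l (f gone)). rewrite <- Hf, !mul1r. reflexivity. Qed.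
Lemma homV (A B : Group) (f : A -> B) x : is_hom f -> f (ginv x) = ginv (f x).
Proof. intro Hf. apply inv_uniq. rewrite <- Hf, mulVr. apply hom1; auto. Qed.

Ltac gsimp := repeat first [rewrite mulKl' | rewrite mulKr' | rewrite mulVr | rewrite mulVl
  | rewrite mul1l | rewrite mul1r | rewrite inv1].

Section HNN.
Context (G : Group) (H : G -> Prop) (theta : G -> G) (Gam : Group) (iota : G -> Gam)
  (tau : Gam) (Sm Sp : G -> Prop).
Hypotheses (HH : is_subgroup H) (Hth : inj_hom_on H theta) (HNN : IsHNN H theta iota tau)
  (NA1 : ~ forall g, H g) (NA2 : ~ forall g, image_on H theta g)
  (TrM : left_transversal H Sm) (Sm1 : Sm gone)
  (TrP : left_transversal (image_on H theta) Sp) (Sp1 : Sp gone).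

Definition Sub (e : bool) (x : G) : Prop := if e then H x else image_on H theta x.
Definition Srep (e : bool) (x : G) : Prop := if e then Sm x else Sp x.

Lemma theta1 : theta gone = gone.
Proof.
  destruct HH as [H1 _]. destruct Hth as [Hm _].
  apply (mul_cancel_l (theta gone)). rewrite <- Hm by auto. rewrite !mul1r. reflexivity.
Qed.

Lemma thetaV h : H h -> theta (ginv h) = ginv (theta h).
Proof.
  intro Hh. destruct HH as [H1 [HM HV]]. destruct Hth as [Hm _].
  apply inv_uniq. rewrite <- Hm by auto. rewrite mulVr. apply theta1.
Qed.

Lemma Sub_sg e : is_subgroup (Sub e).
Proof.
  destruct HH as [H1 [HM HV]]. destruct Hth as [Hm Hi].
  destruct e; simpl.
  - split; [|split]; auto.
  - split; [|split].
    + exists gone. split; auto. apply theta1.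
    + intros x y [a [Ha <-]] [b [Hb <-]]. exists (a ** b). split; auto.
    + intros x [a [Ha <-]]. exists (ginv a). split; auto. apply thetaV; auto.
Qed.

Lemma Sub1 e : Sub e gone.
Proof. apply (Sub_sg e). Qed.
Lemma SubM e x y : Sub e x -> Sub e y -> Sub e (x ** y).
Proof. apply (Sub_sg e). Qed.
Lemma SubV e x : Sub e x -> Sub e (ginv x).
Proof. apply (Sub_sg e). Qed.
Lemma SubVi e x : Sub e (ginv x) -> Sub e x.
Proof. intro. rewrite <- (invK x). apply SubV; auto. Qed.

Lemma Tr e : left_transversal (Sub e) (Srep e).
Proof. destruct e; assumption. Qed.
Lemma Srep1 e : Srep e gone.
Proof. destruct e; assumption. Qed.

Definition rep (e : bool) (g : G) : G :=
  proj1_sig (constructive_indefinite_description _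
    (match Tr e g with ex_intro _ s P => ex_intro _ s (proj1 P) end)).

Lemma rep_spec e g : Srep e (rep e g) /\ Sub e (ginv (rep e g) ** g).
Proof. unfold rep. destruct constructive_indefinite_description as [s Ps]. exact Ps. Qed.

Lemma rep_uniq e g s : Srep e s -> Sub e (ginv s ** g) -> s = rep e g.
Proof.
  intros H1 H2. destruct (Tr e g) as [s0 [P0 U0]].
  pose proof (rep_spec e g) as R.
  transitivity s0; [symmetry|]; apply U0; auto.
Qed.

Lemma rep_self e s : Srep e s -> rep e s = s.
Proof. intro. symmetry. apply rep_uniq; auto. rewrite mulVl. apply Sub1. Qed.

Lemma rep_eq1 e g : rep e g = gone -> Sub e g.
Proof. intro E. destruct (rep_spec e g) as [_ P]. rewrite E, inv1, mul1l in P. exact P. Qed.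

Lemma rep_sub e g : Sub e g -> rep e g = gone.
Proof. intro. symmetry. apply rep_uniq. apply Srep1. rewrite inv1, mul1l. auto. Qed.

Lemma rep_mulr e g k : Sub e k -> rep e (g ** k) = rep e g.
Proof.
  intro Hk. symmetry. apply rep_uniq. apply rep_spec.
  rewrite mulA. apply SubM; auto. apply rep_spec.
Qed.

Lemma Srep_sub e g : Srep e g -> Sub e g -> g = gone.
Proof. intros. rewrite <- (rep_self e g); auto. apply rep_sub; auto. Qed.

Definition thinv (k : G) : G :=
  match excluded_middle_informative (image_on H theta k) with
  | left p => proj1_sig (constructive_indefinite_description _ p)
  | right _ => gone
  end.

Lemma thinv_spec k : image_on H theta k -> H (thinv k) /\ theta (thinv k) = k.
Proof.
  intro P. unfold thinv. destruct excluded_middle_informative as [p|n]; [|contradiction].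
  destruct constructive_indefinite_description as [h Ph]. exact Ph.
Qed.

Lemma thinv_theta h : H h -> thinv (theta h) = h.
Proof.
  intro Hh. assert (P : image_on H theta (theta h)) by (exists h; auto).
  destruct (thinv_spec P) as [A B]. destruct Hth as [_ Hi]. apply Hi; auto.
Qed.

Definition phi (e : bool) (k : G) : G := if e then theta k else thinv k.

Lemma phi_sub e k : Sub e k -> Sub (negb e) (phi e k).
Proof.
  destruct e; simpl; intro P.
  - exists k; auto.
  - apply thinv_spec; auto.
Qed.

Lemma phi_mul e k1 k2 : Sub e k1 -> Sub e k2 -> phi e (k1 ** k2) = phi e k1 ** phi e k2.
Proof.
  destruct Hth as [Hm Hi]. destruct HH as [H1 [HM HV]].
  destruct e; simpl; intros P1 P2.
  - apply Hm; auto.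
  - destruct P1 as [a [Ha <-]]. destruct P2 as [b [Hb <-]].
    rewrite <- Hm by auto. rewrite !thinv_theta; auto.
Qed.

Lemma phi1 e : phi e gone = gone.
Proof.
  destruct e; simpl. apply theta1. pose proof (thinv_theta (proj1 HH)) as E. rewrite theta1 in E. exact E.
Qed.

Lemma iota_hom : is_hom iota.
Proof. apply HNN. Qed.
Lemma iota1 : iota gone = gone.
Proof. apply hom1, iota_hom. Qed.
Lemma iotaM x y : iota (x ** y) = iota x ** iota y.
Proof. apply iota_hom. Qed.
Lemma iotaV x : iota (ginv x) = ginv (iota x).
Proof. apply homV, iota_hom. Qed.

Lemma REL e k : Sub e k -> iota k ** tpow tau e = tpow tau e ** iota (phi e k).
Proof.
  destruct HNN as [_ [R _]].
  destruct e; simpl; intro P.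
  - rewrite <- R by auto. rewrite mulA, mulKr. reflexivity.
  - destruct P as [h [Hh <-]]. rewrite thinv_theta by auto.
    rewrite <- R by auto. rewrite mulKl'. reflexivity.
Qed.

Lemma tpow_neg e : tpow tau e ** tpow tau (negb e) = gone.
Proof. destruct e; simpl. apply mulVr. apply mulVl. Qed.

Definition W := (list (G * bool) * G)%type.
Definition valid (l : list (G * bool)) : Prop := nf_letters Sm Sp l /\ nf_reduced l.
Definition ev (w : W) : Gam := nf_eval iota tau (fst w) (snd w).

Fixpoint gactl (a : G) (l : list (G * bool)) (d : G) {struct l} : W :=
  match l with
  | nil => (nil, a ** d)
  | (g, e) :: rest =>
      let s := rep e (a ** g) in
      let r := gactl (phi e (ginv s ** (a ** g))) rest d in
      ((s, e) :: fst r, snd r)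
  end.
Definition gact (a : G) (w : W) : W := gactl a (fst w) (snd w).

Definition tact (e : bool) (w : W) : W :=
  match fst w with
  | (g, e') :: rest =>
      if excluded_middle_informative (e' = negb e /\ g = gone) then (rest, snd w)
      else ((gone, e) :: fst w, snd w)
  | nil => ([(gone, e)], snd w)
  end.

Lemma ev_cons g e l d : ev ((g, e) :: l, d) = iota g ** (tpow tau e ** ev (l, d)).
Proof. reflexivity. Qed.

Lemma ev_gact a l d : ev (gactl a l d) = iota a ** ev (l, d).
Proof.
  revert a. induction l as [|[g e] l IH]; intro a.
  - unfold ev; simpl. apply iotaM.
  - simpl gactl. cbv zeta.
    set (s := rep e (a ** g)). set (k := ginv s ** (a ** g)).
    change (ev ((s, e) :: fst (gactl (phi e k) l d), snd (gactl (phi e k) l d)))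
      with (ev ((s,e) :: fst (gactl (phi e k) l d), snd (gactl (phi e k) l d))).
    rewrite ev_cons. rewrite <- surjective_pairing, IH, ev_cons.
    assert (Hk : Sub e k) by apply rep_spec.
    rewrite (mulA (tpow tau e)), <- (@REL e k Hk), !mulA, <- !iotaM.
    unfold k. rewrite mulKr. rewrite <- !mulA. reflexivity.
Qed.

Lemma ev_tact e w : ev (tact e w) = tpow tau e ** ev w.
Proof.
  destruct w as [l d]. unfold tact; simpl fst; simpl snd.
  destruct l as [|[g e'] l].
  - unfold ev; simpl. rewrite iota1, mul1l. reflexivity.
  - destruct excluded_middle_informative as [[E1 E2]|n].
    + subst. rewrite ev_cons, iota1, mul1l, mulA, tpow_neg, mul1l. reflexivity.
    + rewrite ev_cons with (g := gone), iota1, mul1l. reflexivity.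
Qed.


Lemma letters_cons g e l : nf_letters Sm Sp ((g, e) :: l) <-> Srep e g /\ nf_letters Sm Sp l.
Proof. unfold nf_letters. rewrite Forall_cons_iff. reflexivity. Qed.

Lemma red_cons2 (p q : G * bool) l : nf_reduced (p :: q :: l) <-> (fst q = gone -> snd p = snd q) /\ nf_reduced (q :: l).
Proof. reflexivity. Qed.

Lemma valid_nil : valid nil.
Proof. split; [constructor | exact I]. Qed.

Lemma valid_tail p l : valid (p :: l) -> valid l.
Proof.
  intros [A B]. split. inversion A; auto. destruct l; simpl in *; tauto.
Qed.

Lemma valid_head g e l : valid ((g, e) :: l) -> Srep e g.
Proof. intros [A _]. apply letters_cons in A. tauto. Qed.

Lemma valid_cons g e l : Srep e g -> valid l ->
  (forall g2 e2 r, l = (g2, e2) :: r -> g2 = gone -> e = e2) -> valid ((g, e) :: l).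
Proof.
  intros S [A B] C. split. apply letters_cons; auto.
  destruct l as [|[g2 e2] r]. simpl; auto.
  apply red_cons2. split; auto. simpl. intro. eapply C; eauto.
Qed.

Lemma valid_cons_inv g e g2 e2 r : valid ((g, e) :: (g2, e2) :: r) -> g2 = gone -> e = e2.
Proof. intros [_ B] E. apply red_cons2 in B. apply B. exact E. Qed.

Lemma gact_shape a l d : map snd (fst (gactl a l d)) = map snd l.
Proof.
  revert a. induction l as [|[g e] l IH]; intro a; simpl; auto. f_equal. apply IH.
Qed.

Lemma gact_len a l d : length (fst (gactl a l d)) = length l.
Proof. rewrite <- (length_map snd), gact_shape, length_map. reflexivity. Qed.

Lemma gact_fst a l d1 d2 : fst (gactl a l d1) = fst (gactl a l d2).
Proof.
  revert a. induction l as [|[g e] l IH]; intro a; simpl; auto. f_equal. apply IH.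
Qed.

Lemma valid_gact a l d : valid l -> valid (fst (gactl a l d)).
Proof.
  revert a. induction l as [|[g e] l IH]; intros a V; simpl.
  - apply valid_nil.
  - apply valid_cons. apply rep_spec. apply IH. eapply valid_tail; eauto.
    set (k := phi e (ginv (rep e (a ** g)) ** (a ** g))).
    assert (Hk : Sub (negb e) k) by (apply phi_sub, rep_spec).
    destruct l as [|[g2 e2] r]; simpl; intros g3 e3 r3 E; [discriminate|].
    injection E as E1 E2 E3. subst g3 e3. intro R1.
    apply rep_eq1 in R1.
    destruct (bool_dec e e2) as [|ne]; auto. exfalso.
    assert (e2 = negb e) by (destruct e, e2; simpl in *; congruence). subst e2.
    assert (Sg : Sub (negb e) g2).
    { rewrite <- (mulKl k g2). apply SubM; auto. apply SubV; auto. }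
    assert (g2 = gone) by (apply (Srep_sub (negb e)); auto; eapply valid_head; eapply valid_tail; eauto).
    apply ne. eapply valid_cons_inv; eauto.
Qed.

Lemma gact1 l d : valid l -> gactl gone l d = (l, d).
Proof.
  induction l as [|[g e] l IH]; intro V; simpl.
  - rewrite mul1l. reflexivity.
  - rewrite mul1l. rewrite rep_self by (eapply valid_head; eauto).
    rewrite mulVl, phi1, IH by (eapply valid_tail; eauto). reflexivity.
Qed.

Lemma gact_comp a b l d :
  gactl a (fst (gactl b l d)) (snd (gactl b l d)) = gactl (a ** b) l d.
Proof.
  revert a b. induction l as [|[g e] l IH]; intros a b; simpl.
  - rewrite mulA. reflexivity.
  - set (s := rep e (b ** g)). set (k := ginv s ** (b ** g)).
    assert (Hk : Sub e k) by apply rep_spec.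
    assert (E1 : a ** b ** g = a ** s ** k) by (unfold k; rewrite <- (mulA a s), mulKr, mulA; reflexivity).
    assert (E2 : rep e (a ** s) = rep e (a ** b ** g)) by (rewrite E1, (@rep_mulr e (a ** s) k Hk); reflexivity).
    rewrite IH. rewrite E2.
    set (s3 := rep e (a ** b ** g)).
    assert (Hk2 : Sub e (ginv s3 ** (a ** s))).
    { unfold s3. rewrite <- E2. apply rep_spec. }
    rewrite <- phi_mul by auto.
    replace (ginv s3 ** (a ** s) ** k) with (ginv s3 ** (a ** b ** g)).
    reflexivity. rewrite E1, !mulA. reflexivity.
Qed.

Lemma valid_tact e l d : valid l -> valid (fst (tact e (l, d))).
Proof.
  intro V. unfold tact; simpl.
  destruct l as [|[g e'] l].
  - apply valid_cons. apply Srep1. apply valid_nil. intros; discriminate.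
  - destruct excluded_middle_informative as [[E1 E2]|n].
    + simpl. eapply valid_tail; eauto.
    + simpl. apply valid_cons; auto. apply Srep1.
      intros g2 e2 r E R. injection E as E1 E2 E3. subst g2 e2 r. subst g.
      destruct e, e'; simpl in *; auto; exfalso; apply n; auto.
Qed.

Lemma tact_inv e l d : valid l -> tact (negb e) (tact e (l, d)) = (l, d).
Proof.
  intro V. unfold tact; simpl.
  destruct l as [|[g e'] l].
  - simpl. destruct excluded_middle_informative as [_|n]; auto.
    exfalso; apply n; rewrite negb_involutive; auto.
  - destruct excluded_middle_informative as [[E1 E2]|n]; simpl.
    + subst. destruct l as [|[g2 e2] r]; simpl.
      * reflexivity.
      * destruct excluded_middle_informative as [[E3 E4]|n]; simpl.
        -- pose proof (valid_cons_inv V E4) as X. rewrite negb_involutive in E3. subst e2.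
           destruct e; discriminate.
        -- reflexivity.
    + destruct excluded_middle_informative as [_|n2]; auto.
      exfalso; apply n2; rewrite negb_involutive; auto.
Qed.

Lemma REL_act h l d : H h -> valid l ->
  tact false (gact h (tact true (l, d))) = gact (theta h) (l, d).
Proof.
  intros Hh V. unfold tact at 2; simpl fst; simpl snd.
  assert (Ethh : rep false (theta h ** gone) = gone).
  { apply rep_sub. rewrite mul1r. exists h; auto. }
  destruct l as [|[g e'] l].
  - unfold gact; simpl. rewrite rep_sub by (rewrite mul1r; exact Hh).
    rewrite inv1, mul1l, mul1r. unfold tact; simpl.
    destruct excluded_middle_informative as [_|n]; [|exfalso; apply n; auto].
    simpl. reflexivity.
  - destruct excluded_middle_informative as [[E1 E2]|n].
    + subst. unfold gact. simpl fst; simpl snd.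
      simpl gactl. rewrite Ethh, inv1, mul1l, mul1r.
      simpl phi. rewrite thinv_theta by auto.
      destruct l as [|[g2 e2] r].
      * simpl. unfold tact; simpl. reflexivity.
      * simpl gactl. unfold tact; simpl.
        destruct excluded_middle_informative as [[A B]|_]; [|reflexivity].
        exfalso. simpl in A. subst e2.
        apply rep_eq1 in B. simpl in B.
        assert (Hg2 : H g2) by (rewrite <- (mulKl h g2); apply HH; auto; apply HH; auto).
        assert (g2 = gone) by (apply (Srep_sub true); auto; eapply valid_head; eapply valid_tail; eauto).
        pose proof (valid_cons_inv V H0). discriminate.
    + unfold gact; simpl fst; simpl snd. simpl gactl at 1.
      rewrite rep_sub by (rewrite mul1r; exact Hh).
      rewrite inv1, mul1l, mul1r. simpl phi.
      unfold tact; simpl. destruct excluded_middle_informative as [_|n2];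
        [|exfalso; apply n2; auto]. simpl. reflexivity.
Qed.


Definition NF := {w : W | valid (fst w)}.

Lemma NF_eq (x y : NF) : proj1_sig x = proj1_sig y -> x = y.
Proof.
  destruct x as [x px], y as [y py]; simpl. intro E. subst y. f_equal. apply proof_irrelevance.
Qed.

Definition gactN (a : G) (x : NF) : NF :=
  exist _ (gact a (proj1_sig x)) (valid_gact a (snd (proj1_sig x)) (proj2_sig x)).
Definition tactN (e : bool) (x : NF) : NF :=
  exist _ (tact e (fst (proj1_sig x), snd (proj1_sig x)))
    (valid_tact e (snd (proj1_sig x)) (proj2_sig x)).

Record Perm := mkPerm { pf : NF -> NF; pinv : NF -> NF;
  pK : forall x, pinv (pf x) = x; pK' : forall x, pf (pinv x) = x }.
Record KE := mkKE { kp : Perm; kgm : Gam;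
  kok : forall w : NF, ev (proj1_sig (pf kp w)) = kgm ** ev (proj1_sig w) }.

Lemma KE_eq (a b : KE) : (forall x, pf (kp a) x = pf (kp b) x) -> kgm a = kgm b -> a = b.
Proof.
  destruct a as [[f fi K1 K2] g P], b as [[f' fi' K1' K2'] g' P']; simpl. intros Ef Eg.
  assert (f = f') by (apply functional_extensionality; auto). subst f'.
  assert (fi = fi').
  { apply functional_extensionality. intro x. rewrite <- (K2' x) at 1. apply K1. }
  subst fi' g'.
  assert (K1 = K1') by apply proof_irrelevance.
  assert (K2 = K2') by apply proof_irrelevance. subst.
  assert (P = P') by apply proof_irrelevance. subst. reflexivity.
Qed.

Lemma kmul_pK (a b : KE) x : pinv (kp b) (pinv (kp a) (pf (kp a) (pf (kp b) x))) = x.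
Proof. rewrite !pK. reflexivity. Qed.
Lemma kmul_pK' (a b : KE) x : pf (kp a) (pf (kp b) (pinv (kp b) (pinv (kp a) x))) = x.
Proof. rewrite !pK'. reflexivity. Qed.
Lemma kmul_ok (a b : KE) w :
  ev (proj1_sig (pf (kp a) (pf (kp b) w))) = kgm a ** kgm b ** ev (proj1_sig w).
Proof. rewrite kok, kok, mulA. reflexivity. Qed.
Definition kmul (a b : KE) : KE :=
  mkKE (mkPerm (fun x => pf (kp a) (pf (kp b) x)) (fun x => pinv (kp b) (pinv (kp a) x))
    (kmul_pK a b) (kmul_pK' a b)) (kgm a ** kgm b) (kmul_ok a b).

Lemma kone_ok (w : NF) : ev (proj1_sig w) = gone ** ev (proj1_sig w).
Proof. rewrite mul1l. reflexivity. Qed.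
Definition kone : KE :=
  mkKE (mkPerm (fun x => x) (fun x => x) (fun x => eq_refl) (fun x => eq_refl)) gone kone_ok.

Lemma kinv_ok (a : KE) w : ev (proj1_sig (pinv (kp a) w)) = ginv (kgm a) ** ev (proj1_sig w).
Proof.
  pose proof (kok a (pinv (kp a) w)) as E. rewrite pK' in E.
  rewrite E, mulKl. reflexivity.
Qed.
Definition kinv (a : KE) : KE :=
  mkKE (mkPerm (pinv (kp a)) (pf (kp a)) (pK' (kp a)) (pK (kp a))) (ginv (kgm a)) (kinv_ok a).

Definition KG : Group.
Proof.
  refine {| car := KE; gmul := kmul; gone := kone; ginv := kinv |}.
  - intros x y z. apply KE_eq; simpl; auto. apply mulA.
  - intros x. apply KE_eq; simpl; auto. apply mul1l.
  - intros x. apply KE_eq; simpl; auto. apply pK. apply mulVl.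
Defined.

Lemma gactN_inv a b x : b ** a = gone -> gactN b (gactN a x) = x.
Proof.
  intro E. apply NF_eq. destruct x as [[l d] v]. unfold gactN, gact; simpl.
  rewrite gact_comp, E. apply gact1; auto.
Qed.
Lemma phiK_ok a (w : NF) : ev (proj1_sig (gactN a w)) = iota a ** ev (proj1_sig w).
Proof. destruct w as [[l d] v]. simpl. unfold gact; simpl. apply ev_gact. Qed.
Definition phiK (a : G) : KG :=
  mkKE (mkPerm (gactN a) (gactN (ginv a)) (fun x => @gactN_inv a (ginv a) x (mulVl a))
    (fun x => @gactN_inv (ginv a) a x (mulVr a)))
    (iota a) (phiK_ok a).

Lemma tactN_inv e x : tactN (negb e) (tactN e x) = x.
Proof.
  apply NF_eq. destruct x as [[l d] v]. unfold tactN; simpl.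
  rewrite <- surjective_pairing. apply (tact_inv e d v).
Qed.
Lemma tK_ok (w : NF) : ev (proj1_sig (tactN true w)) = tau ** ev (proj1_sig w).
Proof. destruct w as [[l d] v]. simpl. apply (ev_tact true). Qed.
Definition tK : KG :=
  mkKE (mkPerm (tactN true) (tactN false) (tactN_inv true) (tactN_inv false)) tau tK_ok.

Lemma phiK_hom : is_hom phiK.
Proof.
  intros a b. apply KE_eq; simpl.
  - intro x. apply NF_eq. destruct x as [[l d] v]. unfold gactN, gact; simpl.
    rewrite gact_comp. reflexivity.
  - apply iotaM.
Qed.

Lemma phiK_rel h : H h -> gmul (gmul (ginv tK) (phiK h)) tK = phiK (theta h).
Proof.
  intro Hh. apply KE_eq; simpl.
  - intro x. apply NF_eq. destruct x as [[l d] v]. unfold gactN, tactN; simpl.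
    apply REL_act; auto.
  - apply HNN; auto.
Qed.

Lemma ex_psi : exists psi : Gam -> KG,
  is_hom psi /\ (forall g, psi (iota g) = phiK g) /\ psi tau = tK.
Proof.
  destruct HNN as [_ [_ U]]. destruct (U KG phiK tK phiK_hom phiK_rel) as [psi [A [B [C _]]]].
  exists psi. auto.
Qed.

Definition psi : Gam -> KG := proj1_sig (constructive_indefinite_description _ ex_psi).
Lemma psi_spec : is_hom psi /\ (forall g, psi (iota g) = phiK g) /\ psi tau = tK.
Proof. unfold psi. destruct constructive_indefinite_description as [p P]. exact P. Qed.

Lemma kg_psi x : kgm (psi x) = x.
Proof.
  destruct psi_spec as [A [B C]].
  destruct HNN as [I1 [I2 U]]. destruct (U Gam iota tau I1 I2) as [p0 [_ [_ [_ U0]]]].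
  assert (E1 : forall y, (fun z => kgm (psi z)) y = p0 y).
  { apply U0.
    - intros a b. rewrite A. reflexivity.
    - intro g. rewrite B. reflexivity.
    - rewrite C. reflexivity. }
  assert (E2 : forall y, (fun z => z) y = p0 y).
  { apply U0; auto. intros a b; reflexivity. }
  simpl in *. rewrite E1, E2. reflexivity.
Qed.

Definition emptyN : NF := exist _ (nil, gone) valid_nil.
Definition nfw (x : Gam) : W := proj1_sig (pf (kp (psi x)) emptyN).

Lemma nf_valid x : valid (fst (nfw x)).
Proof. unfold nfw. apply proj2_sig. Qed.

Lemma nf_ev x : ev (nfw x) = x.
Proof.
  unfold nfw. rewrite kok, kg_psi. unfold ev; simpl. rewrite iota1, mul1r. reflexivity.
Qed.

Lemma psi_mul_pf a b x : pf (kp (psi (a ** b))) x = pf (kp (psi a)) (pf (kp (psi b)) x).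
Proof. destruct psi_spec as [A _]. rewrite A. reflexivity. Qed.

Lemma psi_iota_pf g x : pf (kp (psi (iota g))) x = gactN g x.
Proof. destruct psi_spec as [_ [B _]]. rewrite B. reflexivity. Qed.

Lemma psi_tpow_pf e x : pf (kp (psi (tpow tau e))) x = tactN e x.
Proof.
  destruct psi_spec as [A [_ C]]. destruct e; simpl.
  - rewrite C. reflexivity.
  - rewrite (homV tau A), C. reflexivity.
Qed.

Lemma tact_nopinch g e l d : valid ((g, e) :: l) -> tact e (l, d) = ((gone, e) :: l, d).
Proof.
  intro V. unfold tact; simpl. destruct l as [|[g2 e2] r]; auto.
  destruct excluded_middle_informative as [[A B]|n]; auto.
  exfalso. pose proof (valid_cons_inv V B). subst. destruct e; discriminate.
Qed.

Lemma gact_head1 g e l d : valid ((g, e) :: l) -> gactl g ((gone, e) :: l) d = ((g, e) :: l, d).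
Proof.
  intro V. simpl. rewrite mul1r, rep_self by (eapply valid_head; eauto).
  rewrite mulVl, phi1, gact1 by (eapply valid_tail; eauto). reflexivity.
Qed.

Lemma nf_ev_self l d : valid l -> nfw (ev (l, d)) = (l, d).
Proof.
  intro V. unfold nfw. induction l as [|[g e] l IH].
  - unfold ev; simpl. rewrite psi_iota_pf. simpl. unfold gact; simpl. rewrite mul1r. reflexivity.
  - rewrite ev_cons, !psi_mul_pf, psi_iota_pf, psi_tpow_pf.
    assert (E : pf (kp (psi (ev (l, d)))) emptyN = exist _ (l, d) (valid_tail V)).
    { apply NF_eq. simpl. apply IH. eapply valid_tail; eauto. }
    rewrite E. simpl. unfold gact; simpl fst; simpl snd.
    rewrite (tact_nopinch d V). simpl fst; simpl snd. apply gact_head1; auto.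
Qed.

Lemma nf_uniq l d x : valid l -> ev (l, d) = x -> nfw x = (l, d).
Proof. intros V E. subst x. apply nf_ev_self; auto. Qed.


Definition Vx (x : Gam) := fst (nfw x).

Lemma nf_eq_iff l d x : valid l -> (ev (l, d) = x <-> nfw x = (l, d)).
Proof.
  intro V. split. apply nf_uniq; auto. intro E. rewrite <- E. apply nf_ev.
Qed.

Lemma nfw_iota a : nfw (iota a) = (nil, a).
Proof. apply nf_uniq. apply valid_nil. reflexivity. Qed.

Lemma iota_inj a b : iota a = iota b -> a = b.
Proof. intro E. pose proof (nfw_iota a) as A. rewrite E, nfw_iota in A. congruence. Qed.

Lemma ev_last l c a : ev (l, c ** a) = ev (l, c) ** iota a.
Proof.
  induction l as [|[g e] l IH].
  - unfold ev; simpl. apply iotaM.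
  - rewrite !ev_cons, IH, !mulA. reflexivity.
Qed.

Lemma ev_split l c : ev (l, c) = ev (l, gone) ** iota c.
Proof. rewrite <- ev_last, mul1l. reflexivity. Qed.

Lemma ev_app l1 l2 c : ev (l1 ++ l2, c) = ev (l1, gone) ** ev (l2, c).
Proof.
  induction l1 as [|[g e] l IH].
  - unfold ev at 2; simpl. rewrite iota1, mul1l. reflexivity.
  - simpl app. rewrite !ev_cons, IH, !mulA. reflexivity.
Qed.

Lemma nfw_surj x : nfw x = (Vx x, snd (nfw x)).
Proof. apply surjective_pairing. Qed.

Lemma x_ev x : x = ev (Vx x, snd (nfw x)).
Proof. rewrite <- nfw_surj, nf_ev. reflexivity. Qed.

Lemma Vx_valid x : valid (Vx x).
Proof. apply nf_valid. Qed.

Lemma nfw_gact a x : nfw (iota a ** x) = gactl a (Vx x) (snd (nfw x)).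
Proof.
  rewrite (surjective_pairing (gactl a (Vx x) (snd (nfw x)))).
  apply nf_uniq. apply valid_gact, Vx_valid.
  rewrite <- surjective_pairing, ev_gact, <- x_ev. reflexivity.
Qed.

Lemma nfw_tact e x : nfw (tpow tau e ** x) = tact e (Vx x, snd (nfw x)).
Proof.
  rewrite (surjective_pairing (tact e (Vx x, snd (nfw x)))).
  apply nf_uniq. apply valid_tact, Vx_valid.
  rewrite <- surjective_pairing, ev_tact, <- x_ev. reflexivity.
Qed.

Lemma Vx_gact a x : Vx (iota a ** x) = fst (gactl a (Vx x) gone).
Proof. unfold Vx at 1. rewrite nfw_gact. apply gact_fst. Qed.

Lemma Vx_ev l d : valid l -> Vx (ev (l, d)) = l.
Proof. intro V. unfold Vx. rewrite nf_ev_self; auto. Qed.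

Lemma Vx_right x a : Vx (x ** iota a) = Vx x.
Proof.
  rewrite (x_ev x) at 1. rewrite <- ev_last. apply Vx_ev, Vx_valid.
Qed.

Definition Fx (y x : Gam) : Prop := exists a, y ** x = x ** iota a.

Lemma Fx_iff y x : Fx y x <-> Vx (y ** x) = Vx x.
Proof.
  split.
  - intros [a E]. rewrite E. apply Vx_right.
  - intro E. exists (ginv (snd (nfw x)) ** snd (nfw (y ** x))).
    pose proof (x_ev (y ** x)) as A. rewrite E in A.
    etransitivity; [exact A|].
    transitivity (ev (Vx x, snd (nfw x)) ** iota (ginv (snd (nfw x)) ** snd (nfw (y ** x)))).
    rewrite <- ev_last, mulKr. reflexivity. rewrite <- x_ev. reflexivity.
Qed.

Lemma T_dag_iff e x : T_dag iota tau Sm Sp e x <-> exists rest, Vx x = (gone, e) :: rest.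
Proof.
  split.
  - intros [rest [last [A [B C]]]]. exists rest. unfold Vx.
    rewrite (@nf_uniq ((gone, e) :: rest) last x); auto. split; auto.
  - intros [rest E]. exists rest, (snd (nfw x)). split; [|split].
    + pose proof (Vx_valid x) as [A _]. rewrite E in A. exact A.
    + pose proof (Vx_valid x) as [_ A]. rewrite E in A. exact A.
    + rewrite <- E. symmetry. apply x_ev.
Qed.

Lemma iota_G_iff x : (exists a, x = iota a) <-> Vx x = nil.
Proof.
  split.
  - intros [a ->]. unfold Vx. rewrite nfw_iota. reflexivity.
  - intro E. exists (snd (nfw x)). rewrite (x_ev x) at 1. rewrite E. reflexivity.
Qed.

Definition jn (l1 l2 : list (G * bool)) : Prop :=
  forall l0 p g e r, l1 = l0 ++ [p] -> l2 = (g, e) :: r -> g = gone -> snd p = e.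

Lemma red_app_l (l1 l2 : list (G * bool)) : nf_reduced (l1 ++ l2) -> nf_reduced l1.
Proof.
  induction l1 as [|p l1 IH]; simpl.
  - intros; exact I.
  - destruct l1 as [|q l1]; simpl.
    + intros; split; exact I.
    + intros [A B]. split; auto. apply IH. exact B.
Qed.

Lemma red_app_r (l1 l2 : list (G * bool)) : nf_reduced (l1 ++ l2) -> nf_reduced l2.
Proof.
  induction l1 as [|p l1 IH]; simpl; auto.
  intros [_ B]. auto.
Qed.

Lemma valid_app_l l1 l2 : valid (l1 ++ l2) -> valid l1.
Proof.
  intros [A B]. split. unfold nf_letters in *. apply Forall_app in A. tauto.
  eapply red_app_l; eauto.
Qed.

Lemma valid_app_r l1 l2 : valid (l1 ++ l2) -> valid l2.
Proof.
  intros [A B]. split. unfold nf_letters in *. apply Forall_app in A. tauto.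
  eapply red_app_r; eauto.
Qed.

Lemma red_adj (l0 : list (G * bool)) p q r : nf_reduced (l0 ++ p :: q :: r) -> fst q = gone -> snd p = snd q.
Proof.
  induction l0 as [|x l0 IH]; simpl.
  - intros [A _]. exact A.
  - destruct l0; simpl; intros [_ B]; apply IH; auto.
Qed.

Lemma valid_app_jn l1 l2 : valid (l1 ++ l2) -> jn l1 l2.
Proof.
  intros [_ B]. unfold jn. intros l0 p g e r E1 E2 E3. subst l1 l2. rewrite <- app_assoc in B. simpl in B.
  apply (red_adj l0 p (g, e) r B). exact E3.
Qed.

Lemma valid_app l1 l2 : valid l1 -> valid l2 -> jn l1 l2 -> valid (l1 ++ l2).
Proof.
  intros [A1 B1] [A2 B2] J. split.
  - unfold nf_letters in *. apply Forall_app; auto.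
  - clear A1 A2. induction l1 as [|p l1 IH]; simpl; auto.
    split.
    + destruct l1 as [|q l1]; simpl.
      * destruct l2 as [|[g e] r]; auto. intro E. apply (J nil p g e r); auto.
      * simpl in B1. tauto.
    + apply IH.
      * destruct l1; simpl in *; tauto.
      * intros l0 p' g e r E1 E2 E3. apply (J (p :: l0) p' g e r); auto. rewrite E1; reflexivity.
Qed.

Lemma jn_nil_r l : jn l nil.
Proof. unfold jn. intros l0 p g e r _ E. discriminate. Qed.
Lemma jn_nil_l l : jn nil l.
Proof. unfold jn. intros l0 p g e r E. destruct l0; discriminate. Qed.

Lemma jn_app_r l1 q Q R : jn l1 (q :: Q) -> jn l1 ((q :: Q) ++ R).
Proof. unfold jn. intros J l0 p g e r E1 E2 E3. simpl in E2. injection E2 as E4 E5. subst q. eapply J; eauto. Qed.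

Lemma jn_last l0 g0 e0 g e r : jn (l0 ++ [(g0, e0)]) ((g, e) :: r) <-> (g = gone -> e0 = e).
Proof.
  split.
  - intros J E. apply (J l0 (g0, e0) g e r); auto.
  - unfold jn. intros C l1 p g' e' r' E1 E2 E3. apply app_inj_tail in E1 as [_ <-].
    injection E2 as -> -> ->. simpl. auto.
Qed.

Lemma nfw_app l1 y : valid l1 -> jn l1 (Vx y) -> nfw (ev (l1, gone) ** y) = (l1 ++ Vx y, snd (nfw y)).
Proof.
  intros V J. apply nf_uniq. apply valid_app; auto. apply Vx_valid.
  rewrite ev_app, <- x_ev. reflexivity.
Qed.

Definition Cyl (Q : list (G * bool)) (x : Gam) : Prop := exists R, Vx x = Q ++ R.


Lemma Vx_tact_np e x : ~ T_dag iota tau Sm Sp (negb e) x -> Vx (tpow tau e ** x) = (gone, e) :: Vx x.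
Proof.
  intro NT. unfold Vx at 1. rewrite nfw_tact. unfold tact; simpl fst.
  destruct (Vx x) as [|[g e'] r] eqn:EV; simpl; auto.
  destruct excluded_middle_informative as [[A B]|n]; simpl; auto.
  exfalso. apply NT. apply T_dag_iff. exists r. rewrite EV, A, B. reflexivity.
Qed.

Lemma Vx_gact_cons a x g e r : Vx x = (g, e) :: r ->
  exists r', Vx (iota a ** x) = (rep e (a ** g), e) :: r'.
Proof.
  intro E. rewrite Vx_gact, E. simpl. eexists. reflexivity.
Qed.

Lemma exists_nontriv e : exists b, Srep e b /\ b <> gone.
Proof.
  destruct e.
  - apply not_all_ex_not in NA1 as [g Hg]. exists (rep true g). split. apply rep_spec.
    intro E. apply Hg. apply (rep_eq1 true g E).
  - apply not_all_ex_not in NA2 as [g Hg]. exists (rep false g). split. apply rep_spec.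
    intro E. apply Hg. apply (rep_eq1 false g E).
Qed.

Lemma Vx_one : Vx gone = nil.
Proof. rewrite <- iota1. unfold Vx. rewrite nfw_iota. reflexivity. Qed.

Lemma not_Tdag_nil e x : Vx x = nil -> ~ T_dag iota tau Sm Sp e x.
Proof. intros E T. apply T_dag_iff in T as [r R]. congruence. Qed.

Definition Kq (e : bool) := quasi_kernel H iota tau Sm Sp e.
Definition Int := interior H iota tau Sm Sp.

Lemma int_K e x : trivial_set Int -> Kq e x -> x = gone.
Proof.
  intros T Kx. apply T. unfold Int, interior, normal_closure. intros N _ HA. apply HA.
  destruct e; auto.
Qed.

Lemma K_int : (forall e, trivial_set (Kq e)) -> trivial_set Int.
Proof.
  intros T x Hx. apply (Hx (fun z => z = gone)).
  - split; [split; [|split]|].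
    + reflexivity.
    + intros a b -> ->. apply mul1l.
    + intros a ->. apply inv1.
    + intros a b ->. rewrite mul1r, mulVr. reflexivity.
  - intros y [A|A]. apply (T true y A). apply (T false y A).
Qed.

Lemma conj_alg (z r m : Gam) : ginv z ** (z ** r ** m ** ginv (z ** r)) ** z = r ** m ** ginv r.
Proof. rewrite inv_mul, !mulA, mulVl, mul1l, mulKr'. reflexivity. Qed.

Lemma transfer e k b : Kq e k -> Srep e b -> b <> gone ->
  Kq (negb e) (ginv (iota b ** tpow tau e) ** k ** (iota b ** tpow tau e)).
Proof.
  intros Kk Sb nb r NT.
  assert (NT2 : ~ T_dag iota tau Sm Sp e (iota b ** tpow tau e ** r)).
  { intro T. apply T_dag_iff in T as [rr E].
    rewrite <- mulA in E.
    destruct (@Vx_gact_cons b (tpow tau e ** r) gone e (Vx r)) as [r' E'].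
    apply Vx_tact_np. exact NT.
    rewrite E in E'. rewrite mul1r, rep_self in E' by auto. injection E' as E1 _. auto. }
  destruct (Kk _ NT2) as [h [Hh Eh]]. exists h. split; auto.
  rewrite Eh. apply conj_alg.
Qed.

Lemma K_nontriv_swap e : ~ trivial_set (Kq e) -> ~ trivial_set (Kq (negb e)).
Proof.
  intros NT T. apply NT. intros k Kk.
  destruct (exists_nontriv e) as [b [Sb nb]].
  pose proof (T _ (transfer Kk Sb nb)) as E.
  apply (mul_cancel_l (ginv (iota b ** tpow tau e))).
  apply (mul_cancel_r (iota b ** tpow tau e)). rewrite E, mul1r, mulVl. reflexivity.
Qed.

Lemma K_sub_H e k : Kq e k -> exists h, H h /\ k = iota h.
Proof.
  intro Kk. destruct (Kk gone) as [h [Hh E]].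
  apply not_Tdag_nil, Vx_one.
  exists h. split; auto. rewrite E, mul1l, inv1, mul1r. reflexivity.
Qed.

Lemma Srep_true_notH b : Srep true b -> b <> gone -> ~ H b.
Proof. intros S n Hb. apply n. apply (Srep_sub true); auto. Qed.

Lemma K_true_not_c6 k : Kq true k -> k <> gone ->
  exists F : list G, (forall f, In f F -> H f /\ f <> gone) /\
    forall g : Gam, exists f, In f F /\ exists a, H a /\ conj g (iota f) = iota a.
Proof.
  intros Kk nk. destruct (K_sub_H Kk) as [h [Hh Ek]].
  assert (nh : h <> gone) by (intro; subst; apply nk; apply iota1).
  destruct (exists_nontriv true) as [b [Sb nb]].
  pose proof (Srep_true_notH Sb nb) as nHb.
  destruct (Kk (iota (ginv b))) as [h' [Hh' Eh']].
  apply not_Tdag_nil. unfold Vx. rewrite nfw_iota. reflexivity.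
  assert (Eh2 : b ** h ** ginv b = h').
  { apply iota_inj. rewrite !iotaM, <- Ek, Eh', !iotaV, invK, !mulA, mulVr, mul1l, mulKl'. reflexivity. }
  exists [h; b ** h ** ginv b]. split.
  - intros f [<-|[<-|[]]]; split; auto.
    + rewrite Eh2. auto.
    + intro E. apply nh. apply (mul_cancel_l b). apply (mul_cancel_r (ginv b)).
      rewrite E, mul1r, mulVr. reflexivity.
  - intro g. destruct (classic (T_dag iota tau Sm Sp true (ginv g))) as [T|NT].
    + apply T_dag_iff in T as [R ER].
      assert (NT2 : ~ T_dag iota tau Sm Sp true (iota (ginv b) ** ginv g)).
      { intro T2. apply T_dag_iff in T2 as [R2 E2].
        destruct (@Vx_gact_cons (ginv b) (ginv g) gone true R ER) as [r' E'].
        rewrite E2 in E'. injection E' as E1 _. rewrite mul1r in E1.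
        apply nHb. apply HH in Hh' as _. symmetry in E1. apply rep_eq1 in E1. simpl in E1.
        rewrite <- invK. apply HH. exact E1. }
      destruct (Kk _ NT2) as [h2 [Hh2 E2]].
      exists (b ** h ** ginv b). split. right; left; reflexivity.
      exists h2. split; auto. unfold conj. rewrite !iotaM, <- Ek, iotaV, E2.
      rewrite !inv_mul, !iotaV, !invK, !mulA. gsimp. reflexivity.
    + destruct (Kk _ NT) as [h2 [Hh2 E2]].
      exists h. split. left; reflexivity. exists h2. split; auto.
      unfold conj. rewrite <- Ek, E2, invK, !mulA, mulVr, mul1l, mulKl'. reflexivity.
Qed.


Lemma nfw_tau : nfw tau = ([(gone, true)], gone).
Proof. apply nf_uniq. apply valid_cons. apply Srep1. apply valid_nil. intros; discriminate.
  unfold ev; simpl. rewrite iota1, mul1l, mul1r. reflexivity. Qed.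

Lemma nfw_iota_tau c : nfw (iota c ** tau) = ([(rep true c, true)], theta (ginv (rep true c) ** c)).
Proof.
  rewrite nfw_gact. unfold Vx. rewrite nfw_tau. simpl. rewrite !mul1r. reflexivity.
Qed.

Lemma GH a b : ginv tau ** iota a ** tau = iota b -> H a.
Proof.
  intro E. assert (E2 : Vx (tpow tau false ** (iota a ** tau)) = nil).
  { simpl. rewrite mulA, E. unfold Vx. rewrite nfw_iota. reflexivity. }
  unfold Vx in E2. rewrite nfw_tact in E2. unfold Vx in E2. rewrite nfw_iota_tau in E2.
  unfold tact in E2. simpl in E2.
  destruct excluded_middle_informative as [[_ B]|n]. apply (rep_eq1 true a B).
  discriminate.
Qed.

Lemma not_jn l q Q : ~ jn l (q :: Q) ->
  exists l0 g0 e0, l = l0 ++ [(g0, e0)] /\ fst q = gone /\ e0 <> snd q.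
Proof.
  intro NJ. destruct (classic (l = nil)) as [->|Hl].
  - exfalso. apply NJ, jn_nil_l.
  - destruct (exists_last Hl) as [l' [[g0 e0] El]]. subst l.
    destruct q as [g e]. exists l', g0, e0. split; auto.
    rewrite jn_last in NJ. simpl.
    destruct (classic (g = gone)) as [Eg|Eg].
    + split; [exact Eg| intro E; apply NJ; intro; exact E].
    + exfalso; apply NJ; intro; contradiction.
Qed.

Lemma lemR r : ~ T_dag iota tau Sm Sp false r -> ~ T_dag iota tau Sm Sp false (r ** tau).
Proof.
  intros NT T. apply T_dag_iff in T as [rest ER].
  set (l := Vx r) in *. set (c := snd (nfw r)).
  assert (Er : r ** tau = ev (l, gone) ** (iota c ** tau)).
  { rewrite (x_ev r) at 1. rewrite ev_split. fold l c. rewrite mulA. reflexivity. }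
  set (s := rep true c) in *. set (c' := theta (ginv s ** c)).
  assert (Ey : Vx (iota c ** tau) = [(s, true)]) by (unfold Vx; rewrite nfw_iota_tau; reflexivity).
  destruct (classic (jn l [(s, true)])) as [J|NJ].
  - rewrite <- Ey in J. pose proof (@nfw_app l (iota c ** tau) (Vx_valid r) J) as E.
    rewrite <- Er in E. unfold Vx in ER. rewrite E in ER. simpl in ER. rewrite Ey in ER.
    destruct l as [|p l'] eqn:El.
    + simpl in ER. discriminate.
    + simpl in ER. injection ER as -> _. apply NT. apply T_dag_iff. exists l'. fold l. rewrite El. reflexivity.
  - apply not_jn in NJ as [l0 [g0 [e0 [El [Es Ee]]]]]. simpl in Es, Ee.
    assert (e0 = false) by (destruct e0; auto; contradiction). subst e0.
    assert (Eq : r ** tau = ev (l0, g0 ** c')).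
    { rewrite Er, El, ev_app. rewrite (ev_split l0 (g0 ** c')), iotaM.
      pose proof (x_ev (iota c ** tau)) as X. rewrite Ey in X.
      rewrite nfw_iota_tau in X. simpl in X. fold s c' in X. rewrite X.
      rewrite Es. unfold ev; simpl. rewrite !iota1. gsimp. rewrite !mulA. gsimp. reflexivity. }
    assert (V0 : valid l0) by (apply (@valid_app_l l0 [(g0, false)]); rewrite <- El; apply Vx_valid).
    rewrite Eq in ER. rewrite Vx_ev in ER by auto.
    apply NT. apply T_dag_iff. exists (rest ++ [(g0, false)]). fold l. rewrite El, ER. reflexivity.
Qed.

Lemma fixC_true y : trivial_set Int -> (forall x, T_dag iota tau Sm Sp true x -> Fx y x) -> y = gone.
Proof.
  intros TI F.
  set (z := ginv tau ** y ** tau).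
  assert (Kz : Kq false z).
  { intros r NT.
    assert (T1 : T_dag iota tau Sm Sp true (tau ** r)).
    { apply T_dag_iff. exists (Vx r). apply (Vx_tact_np true). exact NT. }
    destruct (F _ T1) as [a Ea].
    assert (T2 : T_dag iota tau Sm Sp true (tau ** (r ** tau))).
    { apply T_dag_iff. exists (Vx (r ** tau)). apply (Vx_tact_np true). apply lemR; auto. }
    destruct (F _ T2) as [b Eb].
    assert (E1 : tau ** r ** iota a ** tau = tau ** r ** tau ** iota b).
    { rewrite !mulA in Eb. rewrite <- Eb, <- Ea, !mulA. reflexivity. }
    assert (Ha : H a).
    { apply (@GH a b). apply (mul_cancel_l (tau ** r ** tau)).
      rewrite <- E1. rewrite !mulA. gsimp. reflexivity. }
    exists a. split; auto.
    apply (mul_cancel_r r). unfold z. gsimp.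
    rewrite <- (mulA (ginv tau ** y) tau r), <- (mulA (ginv tau) y (tau ** r)), Ea.
    rewrite !mulA. gsimp. reflexivity. }
  pose proof (int_K TI Kz) as E. unfold z in E.
  apply (mul_cancel_l (ginv tau)). apply (mul_cancel_r tau). rewrite E. gsimp. reflexivity.
Qed.


Lemma fixC_false y : trivial_set Int -> (forall x, T_dag iota tau Sm Sp false x -> Fx y x) -> y = gone.
Proof.
  intros TI F.
  destruct (exists_nontriv true) as [b [Sb nb]].
  set (w0 := ginv tau ** iota b).
  assert (E : ginv w0 ** y ** w0 = gone).
  { apply fixC_true; auto. intros x T. apply T_dag_iff in T as [R ER].
    destruct (@Vx_gact_cons b x gone true R ER) as [r' E'].
    rewrite mul1r, rep_self in E' by auto.
    assert (T2 : T_dag iota tau Sm Sp false (tpow tau false ** (iota b ** x))).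
    { apply T_dag_iff. eexists. apply (Vx_tact_np false).
      intro T3. apply T_dag_iff in T3 as [R3 E3]. rewrite E' in E3. simpl in E3. injection E3 as E4 _. contradiction. }
    destruct (F _ T2) as [a Ea]. exists a. unfold w0. simpl in Ea.
    rewrite <- (mulA (ginv (ginv tau ** iota b) ** y)), <- (mulA (ginv (ginv tau ** iota b)) y).
    rewrite <- (mulA (ginv tau) (iota b) x), Ea, inv_mul, invK, !mulA. gsimp. reflexivity. }
  apply (mul_cancel_l (ginv w0)). apply (mul_cancel_r w0). rewrite E. gsimp. reflexivity.
Qed.

Lemma fixC e y : trivial_set Int -> (forall x, T_dag iota tau Sm Sp e x -> Fx y x) -> y = gone.
Proof. destruct e. apply fixC_true. apply fixC_false. Qed.

Definition xP (P : list (G * bool)) : Gam := ev (P, gone).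

Lemma CP1 P Q x : Cyl (P ++ Q) x -> Cyl Q (ginv (xP P) ** x).
Proof.
  intros [R ER]. exists R.
  assert (V : valid (P ++ (Q ++ R))) by (rewrite app_assoc, <- ER; apply Vx_valid).
  rewrite (x_ev x), ER, <- app_assoc, ev_app. fold (xP P). rewrite mulKl.
  apply Vx_ev. eapply valid_app_r; eauto.
Qed.

Lemma CP2 P Q y : valid (P ++ Q) -> Q <> nil -> Cyl Q y -> Cyl (P ++ Q) (xP P ** y).
Proof.
  intros V NQ [R ER]. exists R.
  destruct Q as [|q Q']; [contradiction|].
  assert (J : jn P (Vx y)).
  { rewrite ER. apply jn_app_r. apply valid_app_jn; auto. }
  unfold Vx at 1. unfold xP. rewrite nfw_app; auto. simpl. rewrite ER, app_assoc. reflexivity.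
  eapply valid_app_l; eauto.
Qed.

Lemma CP3 P0 g0 e0 x : valid (P0 ++ [(g0, e0)]) -> ~ Cyl (P0 ++ [(g0, e0)]) x ->
  exists R, Vx (ginv (xP (P0 ++ [(g0, e0)])) ** x) = (gone, negb e0) :: R.
Proof.
  intros V NC. set (P := P0 ++ [(g0, e0)]) in *. set (u := ginv (xP P) ** x).
  destruct (classic (jn P (Vx u))) as [J|NJ].
  - exfalso. apply NC. exists (Vx u). unfold xP in u.
    replace x with (ev (P, gone) ** u) by (unfold u; rewrite mulKr; reflexivity).
    unfold Vx at 1. rewrite nfw_app; auto.
  - destruct (Vx u) as [|[g e] R] eqn:EU.
    + exfalso. apply NJ, jn_nil_r.
    + exists R. unfold P in NJ. rewrite jn_last in NJ.
      destruct (classic (g = gone)) as [Eg|Eg]; [|exfalso; apply NJ; intro; contradiction].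
      subst g. f_equal. f_equal. destruct e, e0; simpl; auto; exfalso; apply NJ; auto.
Qed.

Lemma gact_prefix a Q R d : exists a', fst (gactl a (Q ++ R) d) = fst (gactl a Q d) ++ fst (gactl a' R d).
Proof.
  revert a. induction Q as [|[g e] Q IH]; intro a.
  - exists a. reflexivity.
  - simpl. destruct (IH (phi e (ginv (rep e (a ** g)) ** (a ** g)))) as [a' E].
    exists a'. rewrite E. reflexivity.
Qed.

Lemma app_inv_len (A B C D : list (G * bool)) : A ++ B = C ++ D -> length A = length C -> A = C.
Proof.
  revert C. induction A as [|x A IH]; intros C E L; destruct C as [|y C]; simpl in *; try discriminate; auto.
  injection E as -> E. f_equal. apply IH; auto.
Qed.

Lemma nth1_app (l W : list (G * bool)) p d : l <> nil -> nth 1 (l ++ p :: W) d = nth 1 (l ++ [p]) d.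
Proof. intro N. destruct l as [|a [|b l']]; simpl; auto. contradiction. Qed.

Lemma SL f delta : trivial_set Int -> f <> gone ->
  exists Q, Q <> nil /\ valid Q /\ (forall r, Q <> (gone, delta) :: r) /\
    forall x, Cyl Q x -> ~ Cyl Q (f ** x).
Proof.
  intros TI nf.
  set (l := Vx f). set (c := snd (nfw f)).
  assert (Ef : f = ev (l, c)) by apply x_ev.
  destruct (classic (l = nil)) as [El|NEl].
  -
    assert (Ef2 : f = iota c) by (rewrite Ef, El; reflexivity).
    assert (Ex : exists x, T_dag iota tau Sm Sp (negb delta) x /\ ~ Fx f x).
    { apply NNPP. intro N. apply nf. apply (@fixC (negb delta)); auto.
      intros x T. apply NNPP. intro NF. apply N. exists x; auto. }
    destruct Ex as [x [T NFx]]. rewrite Fx_iff in NFx.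
    apply T_dag_iff in T as [R0 ER0].
    exists (Vx x). split; [|split; [|split]].
    + rewrite ER0. discriminate.
    + apply Vx_valid.
    + intros r E. rewrite ER0 in E. injection E as E1 _. destruct delta; discriminate.
    + intros y [R ER] [R' ER'].
      apply NFx.
      rewrite Ef2, Vx_gact in ER'. rewrite ER in ER'.
      destruct (gact_prefix c (Vx x) R gone) as [a' Ea']. rewrite Ea' in ER'.
      rewrite Ef2, Vx_gact.
      apply app_inv_len in ER'; auto. rewrite gact_len. reflexivity.
  - destruct (exists_last NEl) as [l0 [[g0 eps] El]].
    destruct (exists_nontriv eps) as [s [Ss ns]].
    set (t := nth 1 (l ++ [(rep eps (c ** s), eps)]) (gone, eps)).
    set (b := if excluded_middle_informative (t = (gone, eps)) then s else gone).
    assert (Hb : (b, eps) <> t).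
    { unfold b. destruct excluded_middle_informative as [E|n].
      - rewrite E. intro E2. injection E2 as E3. contradiction.
      - intro E2. apply n. rewrite <- E2. reflexivity. }
    assert (Sb : Srep eps b).
    { unfold b. destruct excluded_middle_informative; auto. apply Srep1. }
    exists [(s, eps); (b, eps)]. split; [discriminate|split; [|split]].
    + apply valid_cons; auto. apply valid_cons; auto. apply valid_nil. intros; discriminate.
      intros g2 e2 r E _. injection E as _ -> _. reflexivity.
    + intros r E. injection E as E1 _. contradiction.
    + intros x [R ER] [R' ER'].
      assert (E1 : f ** x = ev (l, gone) ** (iota c ** x)).
      { rewrite Ef, ev_split, mulA. reflexivity. }
      destruct (@Vx_gact_cons c x s eps ((b, eps) :: R) ER) as [r' E'].
      assert (J : jn l (Vx (iota c ** x))).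
      { rewrite E', El. apply jn_last. auto. }
      assert (E2 : Vx (f ** x) = l ++ Vx (iota c ** x)).
      { rewrite E1. unfold Vx at 1. rewrite nfw_app; auto. apply Vx_valid. }
      rewrite E2, E' in ER'.
      apply Hb. unfold t. rewrite <- nth1_app with (W := r') by auto.
      rewrite ER'. reflexivity.
Qed.


Lemma ML : trivial_set Int -> forall F : list Gam, (forall f, In f F -> f <> gone) ->
  exists P, P <> nil /\ valid P /\ forall f, In f F -> forall x, Cyl P x -> ~ Cyl P (f ** x).
Proof.
  intros TI F. induction F as [|f F IH]; intro HF.
  - exists [(gone, true)]. split; [discriminate|split].
    + apply valid_cons. apply Srep1. apply valid_nil. intros; discriminate.
    + intros f [].
  - destruct IH as [P [NP [VP HP]]]. intros; apply HF; right; auto.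
    destruct (exists_last NP) as [P0 [[g0 eP] EP]].
    set (f' := ginv (xP P) ** f ** xP P).
    assert (nf' : f' <> gone).
    { intro E. apply (HF f). left; reflexivity. unfold f' in E.
      apply (mul_cancel_l (ginv (xP P))). apply (mul_cancel_r (xP P)). rewrite E. gsimp. reflexivity. }
    destruct (SL (negb eP) TI nf') as [Q [NQ [VQ [HQ CQ]]]].
    exists (P ++ Q). split; [|split].
    + destruct P; [contradiction|discriminate].
    + apply valid_app; auto. destruct Q as [|[g e] r]; [contradiction|].
      rewrite EP. apply jn_last. intro Eg. subst g.
      destruct (bool_dec eP e) as [|ne]; auto. exfalso. apply (HQ r).
      f_equal. f_equal. destruct eP, e; simpl; congruence.
    + intros f0 [<-|Hf0] x Cx.
      * intro C2. apply CP1 in Cx. apply CP1 in C2. apply (CQ _ Cx).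
        replace (f' ** (ginv (xP P) ** x)) with (ginv (xP P) ** (f ** x)); auto.
        unfold f'. rewrite !mulA. gsimp. reflexivity.
      * intro C2. apply (HP f0 Hf0 x).
        -- destruct Cx as [R ER]. exists (Q ++ R). rewrite ER, app_assoc. reflexivity.
        -- destruct C2 as [R ER]. exists (Q ++ R). rewrite ER, app_assoc. reflexivity.
Qed.

Lemma c3_of_ML : trivial_set Int -> forall F : list Gam, (forall f, In f F -> f <> gone) ->
  exists g : Gam, forall f, In f F -> forall a : G, conj g f <> iota a.
Proof.
  intros TI F HF. destruct (@ML TI F HF) as [P [NP [VP HP]]].
  exists (ginv (xP P)). intros f Hf a E. unfold conj in E. rewrite invK in E.
  assert (E2 : f ** xP P = xP P ** iota a).
  { rewrite <- E. rewrite !mulA. gsimp. reflexivity. }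
  assert (C1 : Cyl P (xP P)) by (exists nil; rewrite app_nil_r; apply Vx_ev; auto).
  apply (HP f Hf (xP P) C1). rewrite E2. exists nil. rewrite app_nil_r, Vx_right. apply Vx_ev; auto.
Qed.

Lemma nth_repeat_lt (a : G * bool) k j M d : j < k -> nth j (repeat a k ++ M) d = a.
Proof.
  revert j. induction k as [|k IH]; intros j L; [inversion L|].
  destruct j as [|j]; simpl; auto. apply IH. apply PeanoNat.Nat.succ_lt_mono; auto.
Qed.

Lemma nth_repeat_eq (a : G * bool) j M d : nth j (repeat a j ++ M) d = nth 0 M d.
Proof. induction j as [|j IH]; simpl; auto. Qed.

Lemma red_same (e : bool) (l : list (G * bool)) : (forall p, In p l -> snd p = e) -> nf_reduced l.
Proof.
  induction l as [|p l IH]; intro A; simpl; auto.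
  split.
  - destruct l as [|q l]; auto. intros _. rewrite (A p), (A q); simpl; auto.
  - apply IH. intros; apply A; right; auto.
Qed.

Lemma valid_Q s e j : Srep e s -> valid (repeat (s, e) j ++ [(gone, e)]).
Proof.
  intro S. split.
  - unfold nf_letters. apply Forall_app. split.
    + apply Forall_forall. intros x Hx. apply repeat_spec in Hx. subst x. exact S.
    + constructor; [apply Srep1|constructor].
  - apply red_same with (e := e). intros p Hp. apply in_app_or in Hp as [Hp|[<-|[]]]; auto.
    apply repeat_spec in Hp. subst p. reflexivity.
Qed.

Lemma powers_of_ML : trivial_set Int -> is_powers_group Gam.
Proof.
  intros TI F HF n _. destruct (@ML TI F HF) as [P [NP [VP HP]]].
  destruct (exists_last NP) as [P0 [[g0 eP] EP]].
  destruct (exists_nontriv (negb eP)) as [s [Ss ns]].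
  set (Q := fun j => repeat (s, negb eP) j ++ [(gone, negb eP)]).
  exists (Cyl P), (fun j => xP (Q j) ** ginv (xP P)). split.
  - intros f x Hf Cx. apply HP; auto.
  - assert (KEY : forall j x, ~ Cyl P x -> exists R,
        Vx (xP (Q j) ** ginv (xP P) ** x) = Q j ++ (gone, negb eP) :: R).
    { intros j x NC. rewrite EP in NC.
      assert (VP' : valid (P0 ++ [(g0, eP)])) by (rewrite <- EP; auto).
      destruct (@CP3 P0 g0 eP x VP' NC) as [R ER].
      exists R. rewrite <- mulA. unfold xP at 1. unfold Vx at 1. rewrite nfw_app.
      - simpl. rewrite <- EP in ER. rewrite ER. reflexivity.
      - apply valid_Q; auto.
      - rewrite <- EP in ER. rewrite ER. unfold Q. apply jn_last. auto. }
    intros j k Lj Lk njk x y Nx Ny E.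
    destruct (KEY j x Nx) as [R1 E1]. destruct (KEY k y Ny) as [R2 E2].
    rewrite E in E1. rewrite E1 in E2. unfold Q in E2. rewrite <- !app_assoc in E2.
    destruct (PeanoNat.Nat.lt_trichotomy j k) as [L|[L|L]].
    + apply (f_equal (fun z => nth j z (gone, true))) in E2.
      rewrite nth_repeat_eq, nth_repeat_lt in E2 by auto. simpl in E2.
      injection E2 as E3. apply ns. auto.
    + contradiction.
    + apply (f_equal (fun z => nth k z (gone, true))) in E2.
      rewrite nth_repeat_eq, nth_repeat_lt in E2 by auto. simpl in E2.
      injection E2 as E3. apply ns. auto.
Qed.


Theorem main_sec :
  let c1 := trivial_set (interior H iota tau Sm Sp) in
  let c2 := exists e : bool, trivial_set (quasi_kernel H iota tau Sm Sp e) in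
  let c2' := forall e : bool, trivial_set (quasi_kernel H iota tau Sm Sp e) in
  let c3 := forall F : list Gam, (forall f, In f F -> f <> gone) ->
            exists g : Gam, forall f, In f F -> forall a : G, conj g f <> iota a in
  let c4 := forall F : list Gam, (forall f, In f F -> f <> gone) ->
            exists g : Gam, forall f, In f F -> forall a : G, H a -> conj g f <> iota a in
  let c5 := forall F : list G, (forall f, In f F -> f <> gone) ->
            exists g : Gam, forall f, In f F -> forall a : G, H a -> conj g (iota f) <> iota a in
  let c6 := forall F : list G, (forall f, In f F -> H f /\ f <> gone) ->
            exists g : Gam, forall f, In f F -> forall a : G, H a -> conj g (iota f) <> iota a in
  ((c1 <-> c2) /\ (c1 <-> c2') /\ (c1 <-> c3) /\ (c1 <-> c4) /\ (c1 <-> c5) /\ (c1 <-> c6)) /\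
  (c1 -> is_powers_group Gam).
Proof.
  intros c1 c2 c2' c3 c4 c5 c6.
  assert (A12' : c1 -> c2') by (intros T e x Kx; exact (@int_K e x T Kx)).
  assert (A2'1 : c2' -> c1) by (intro T; apply K_int; exact T).
  assert (A22' : c2 <-> c2').
  { split.
    - intros [e Te] e'. destruct (bool_dec e' e) as [->|ne]; auto.
      apply NNPP. intro N. apply (K_nontriv_swap N).
      replace (negb e') with e by (destruct e, e'; simpl in *; congruence). exact Te.
    - intro T. exists true. apply T. }
  assert (A13 : c1 -> c3) by (intro T; exact (c3_of_ML T)).
  assert (A34 : c3 -> c4).
  { intros C F HF. destruct (C F HF) as [g Hg]. exists g. intros f Hf a _. apply Hg; auto. }
  assert (A45 : c4 -> c5).
  { intros C F HF. destruct (C (map iota F)) as [g Hg].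
    - intros f Hf. apply in_map_iff in Hf as [f0 [<- Hf0]]. intro E.
      apply (HF f0 Hf0). apply iota_inj. rewrite E, iota1. reflexivity.
    - exists g. intros f Hf a Ha. apply Hg; auto. apply in_map; auto. }
  assert (A56 : c5 -> c6).
  { intros C F HF. apply C. intros f Hf. apply HF; auto. }
  assert (A61 : c6 -> c1).
  { intro C. apply NNPP. intro N1.
    assert (N2 : ~ c2') by (intro X; apply N1, A2'1, X).
    assert (N3 : ~ trivial_set (Kq true)).
    { intro T. apply N2. intro e. destruct e; auto.
      apply NNPP. intro N. apply (K_nontriv_swap N). exact T. }
    assert (Ex : exists k, Kq true k /\ k <> gone).
    { apply NNPP. intro N. apply N3. intros k Kk. apply NNPP. intro nk. apply N. exists k; auto. }
    destruct Ex as [k [Kk nk]].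
    destruct (K_true_not_c6 Kk nk) as [F [HF HG]].
    destruct (C F HF) as [g Hg]. destruct (HG g) as [f [Hf [a [Ha E]]]].
    apply (Hg f Hf a Ha E). }
  split.
  - split; [|split; [|split; [|split; [|split]]]]; split; intro X.
    + apply A22'. auto.
    + apply A2'1, A22', X.
    + auto.
    + auto.
    + auto.
    + apply A61, A56, A45, A34, X.
    + auto.
    + apply A61, A56, A45, X.
    + auto.
    + apply A61, A56, X.
    + apply A56, A45, A34, A13, X.
    + auto.
  - intro T. apply powers_of_ML. exact T.
Qed.

End HNN.

Unset Implicit Arguments.

Theorem mainTheorem13 (G : Group) (H : G -> Prop) (theta : G -> G)
  (Gam : Group) (iota : G -> Gam) (tau : Gam) (Sm Sp : G -> Prop) :
  is_subgroup H ->
  inj_hom_on H theta ->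
  IsHNN H theta iota tau ->
  (* non-ascending: H <> G and theta(H) <> G *)
  ~ (forall g : G, H g) ->
  ~ (forall g : G, image_on H theta g) ->
  (* S_{-1}, S_1: left coset representatives of H, theta(H), containing 1 *)
  left_transversal H Sm -> Sm gone ->
  left_transversal (image_on H theta) Sp -> Sp gone ->
  let c1 := trivial_set (interior H iota tau Sm Sp) in
  let c2 := exists e : bool, trivial_set (quasi_kernel H iota tau Sm Sp e) in
  let c2' := forall e : bool, trivial_set (quasi_kernel H iota tau Sm Sp e) in
  let c3 := forall F : list Gam, (forall f, In f F -> f <> gone) ->
            exists g : Gam, forall f, In f F -> forall a : G, conj g f <> iota a in
  let c4 := forall F : list Gam, (forall f, In f F -> f <> gone) ->
            exists g : Gam, forall f, In f F -> forall a : G, H a -> conj g f <> iota a in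
  let c5 := forall F : list G, (forall f, In f F -> f <> gone) ->
            exists g : Gam, forall f, In f F -> forall a : G, H a -> conj g (iota f) <> iota a in
  let c6 := forall F : list G, (forall f, In f F -> H f /\ f <> gone) ->
            exists g : Gam, forall f, In f F -> forall a : G, H a -> conj g (iota f) <> iota a in
  ((c1 <-> c2) /\ (c1 <-> c2') /\ (c1 <-> c3) /\ (c1 <-> c4) /\ (c1 <-> c5) /\ (c1 <-> c6)) /\
  (c1 -> is_powers_group Gam).
Proof.
  intros HH Hth HNN NA1 NA2 TrM Sm1 TrP Sp1.
  exact (main_sec HH Hth HNN NA1 NA2 TrM Sm1 TrP Sp1).
Qed.
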